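(* Assume the standing conventions of the context and suppose $\mathcal D_{Z,Z'}\neq\emptyset$. Let $\Lambda\in\overline{\mathcal S}_Z$ and $\Lambda'\in\overline{\mathcal S}_{Z'}$. (i) If $\Psi'$ is a consecutive pair in $Z'_{\mathrm I}$ with $(Z,\Lambda_{\Psi'})\in\mathcal D_{Z,Z'}$, then $(\Lambda,\Lambda')\in\overline{\mathcal B}^+_{Z,Z'}$ if and only if $(\Lambda,\Lambda'+\Lambda_{\Psi'})\in\overline{\mathcal B}^+_{Z,Z'}$. (ii) If $\Psi$ is a consecutive pair in $Z_{\mathrm I}$ with $(\Lambda_\Psi,Z')\in\mathcal D_{Z,Z'}$, then $(\Lambda,\Lambda')\in\overline{\mathcal B}^+_{Z,Z'}$ if and only if $(\Lambda+\Lambda_{\Psi},\Lambda')\in\overline{\mathcal B}^+_{Z,Z'}$.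
   Context: A symbol is an array $\Lambda=\binom{a'_1,\ldots,a'_{m_1}}{b'_1,\ldots,b'_{m_2}}$ of two strictly decreasing finite sequences of nonnegative integers (top row, bottom row); its defect is $\mathrm{def}(\Lambda)=m_1-m_2$. Standing assumptions: $Z=\binom{a_1,\ldots,a_{m+1}}{b_1,\ldots,b_m}$ is a special symbol of defect $1$, i.e. $a_1\ge b_1\ge a_2\ge b_2\ge\cdots\ge b_m\ge a_{m+1}$; $Z'=\binom{c_1,\ldots,c_{m'}}{d_1,\ldots,d_{m'}}$ is a special symbol of defect $0$, i.e. $c_1\ge d_1\ge c_2\ge d_2\ge\cdots\ge c_{m'}\ge d_{m'}$; and $m'\in\{m,m+1\}$. For a symbol $Y$, $Y_{\mathrm I}$ is the set of entries of $Y$ occurring in exactly one row. For $M\subset Z_{\mathrm I}$, $\Lambda_M$ is the symbol obtained from $Z$ by moving every entry of $M$ to the other row (rows re-sorted decreasingly); for $N\subset Z'_{\mathrm I}$, $\Lambda_N$ is obtained from $Z'$ in the same way. $\overline{\mathcal S}_Z=\{\Lambda_M: M\subset Z_{\mathrm I}\}$, $\overline{\mathcal S}_{Z'}=\{\Lambda_N:N\subset Z'_{\mathrm I}\}$; $\mathcal S_{Z,1}$ (resp. $\mathcal S_{Z',0}$) is the set of elements of $\overline{\mathcal S}_Z$ of defect $1$ (resp. of $\overline{\mathcal S}_{Z'}$ of defect $0$). Sum: $\Lambda_{M_1}+\Lambda_{M_2}:=\Lambda_{(M_1\cup M_2)\smallsetminus(M_1\cap M_2)}$ (for subsets of $Z_{\mathrm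 I}$, and likewise of $Z'_{\mathrm I}$). A consecutive pair in $Z'_{\mathrm I}$ is a two-element subset $\{c_k,d_l\}\subset Z'_{\mathrm I}$, written $\binom{c_k}{d_l}$, with $l\in\{k-1,k\}$; a consecutive pair in $Z_{\mathrm I}$ is $\{a_k,b_l\}\subset Z_{\mathrm I}$, written $\binom{a_k}{b_l}$, with $l\in\{k-1,k\}$. Relation $\overline{\mathcal B}^+_{Z,Z'}\subset\overline{\mathcal S}_Z\times\overline{\mathcal S}_{Z'}$: for $\Lambda=\binom{a'_1,\ldots,a'_{m_1}}{b'_1,\ldots,b'_{m_2}}\in\overline{\mathcal S}_Z$ and $\Lambda'=\binom{c'_1,\ldots,c'_{m'_1}}{d'_1,\ldots,d'_{m'_2}}\in\overline{\mathcal S}_{Z'}$, $(\Lambda,\Lambda')\in\overline{\mathcal B}^+_{Z,Z'}$ iff $\mathrm{def}(\Lambda')=1-\mathrm{def}(\Lambda)$ and: if $m'=m$, $a'_i>d'_i\ge a'_{i+1}$ for $1\le i\le m'_2$ and $b'_{i-1}>c'_i\ge b'_i$ for $1\le i\le m'_1$; if $m'=m+1$, $a'_i\ge d'_i>a'_{i+1}$ for $1\le i\le m'_2$ and $b'_{i-1}\ge c'_i>b'_i$ for $1\le i\le m'_1$; here $b'_0=+\infty$ and nonexistent entries $a'_j,b'_j$ beyond the row lengths are $-\infty$. Then $\mathcal D_{Z,Z'}=\overline{\mathcal B}^+_{Z,Z'}\cap(\mathcal S_{Z,1}\times\mathcal S_{Z',0})$. *)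

(* Defs.v *)
From mathcomp Require Import all_boot all_order all_algebra.
Set Implicit Arguments. Unset Strict Implicit. Unset Printing Implicit Defensive.
Import GRing.Theory Num.Theory.

(* A symbol (top row, bottom row); rows are lists of nats, listed decreasingly. *)
Definition symbol := (seq nat * seq nat)%type.

(* 1-based entries: ent s i = s_i for 1 <= i <= size s. *)
Definition ent (s : seq nat) (i : nat) : nat := nth 0 s i.-1.
Definition has_ent (s : seq nat) (i : nat) : bool := (0 < i) && (i <= size s).

(* Comparisons with the convention that nonexistent entries are -infinity. *)
Definition ent_gt (s : seq nat) i x := has_ent s i && (x < ent s i).
Definition ent_ge (s : seq nat) i x := has_ent s i && (x <= ent s i).
Definition ent_le (s : seq nat) i x := ~~ has_ent s i || (ent s i <= x).
Definition ent_lt (s : seq nat) i x := ~~ has_ent s i || (ent s i < x).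

Definition strict_decr (s : seq nat) : bool := sorted (fun x y => y < x) s.

(* Z = (a ; b) special of defect 1 with m = size b. *)
Definition special_def1 (a b : seq nat) : Prop :=
  [/\ strict_decr a, strict_decr b, size a = (size b).+1 &
      forall i, 1 <= i <= size b -> ent b i <= ent a i /\ ent a i.+1 <= ent b i].

Definition special_def0 (c d : seq nat) : Prop :=
  [/\ strict_decr c, strict_decr d, size c = size d &
      forall i, 1 <= i <= size d -> ent d i <= ent c i /\ ent c i.+1 <= ent d i].

Definition defect (L : symbol) : int := (size L.1)%:Z - (size L.2)%:Z.

Definition singles (Y : symbol) : pred nat :=
  fun x => (x \in Y.1) != (x \in Y.2).


Definition move (M : pred nat) (Y : symbol) : symbol :=
  (sort (fun x y => y <= x) ([seq x <- Y.1 | ~~ M x] ++ [seq x <- Y.2 | M x]),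
   sort (fun x y => y <= x) ([seq x <- Y.2 | ~~ M x] ++ [seq x <- Y.1 | M x])).

(* symmetric difference; Lambda_{M1} + Lambda_{M2} = Lambda_{symdiff M1 M2} *)
Definition symdiff (M1 M2 : pred nat) : pred nat := fun x => M1 x (+) M2 x.

Definition in_Sbar (Y L : symbol) : Prop :=
  exists M : pred nat, subpred M (singles Y) /\ L = move M Y.

Definition Bplus (m m' : nat) (L L' : symbol) : Prop :=
  let: (a', b') := L in let: (c', d') := L' in
  defect L' = (1 - defect L)%R /\
  if m' == m then
    (forall i, 1 <= i <= size d' ->
        ent_gt a' i (ent d' i) && ent_le a' i.+1 (ent d' i)) /\
    (forall i, 1 <= i <= size c' ->
        ((i == 1) || ent_gt b' i.-1 (ent c' i)) && ent_le b' i (ent c' i))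
  else if m' == m.+1 then
    (forall i, 1 <= i <= size d' ->
        ent_ge a' i (ent d' i) && ent_lt a' i.+1 (ent d' i)) /\
    (forall i, 1 <= i <= size c' ->
        ((i == 1) || ent_ge b' i.-1 (ent c' i)) && ent_lt b' i (ent c' i))
  else False.

Definition BplusZ (a b c d : seq nat) (L L' : symbol) : Prop :=
  Bplus (size b) (size c) L L'.

Definition inD (a b c d : seq nat) (L L' : symbol) : Prop :=
  [/\ in_Sbar (a, b) L, defect L = (1%:Z)%R, in_Sbar (c, d) L', defect L' = (0%:Z)%R &
      BplusZ a b c d L L'].

Definition cons_pair (a b : seq nat) (P : pred nat) : Prop :=
  exists k l, [/\ has_ent a k && has_ent b l, (l == k.-1) || (l == k),
    singles (a, b) (ent a k), singles (a, b) (ent b l) &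
    P =1 pred2 (ent a k) (ent b l)].

(* Main.v *)
Require Import Defs.
From mathcomp Require Import all_boot all_order all_algebra zify.
Set Implicit Arguments. Unset Strict Implicit. Unset Printing Implicit Defensive.

Lemma trans_gt : transitive (fun x y : nat => y < x).
Proof. by move=> x y z H1 H2; exact: ltn_trans H2 H1. Qed.

Lemma sdec_cons h t : strict_decr (h :: t) -> strict_decr t /\ all (fun v => v < h) t.
Proof.
rewrite /strict_decr /= => H; split; first exact: path_sorted H.
exact: (order_path_min trans_gt H).
Qed.

Lemma sdec_uniq s : strict_decr s -> uniq s.
Proof. apply: sorted_uniq; [exact: trans_gt | by move=> x /=; rewrite ltnn]. Qed.

Lemma ent_mem s i : has_ent s i -> ent s i \in s.
Proof. rewrite /has_ent /ent; case: i => // i /andP[_ H2]; exact: mem_nth. Qed.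

Lemma idx_count (p : pred nat) s i : strict_decr s ->
  (forall v w, v <= w -> p v -> p w) -> 0 < i ->
  (i <= count p s) = has_ent s i && p (ent s i).
Proof.
move=> + Hp; elim: s i => [|h t IH] i Hs Hi.
  by rewrite /has_ent /=; case: i Hi.
have [Ht Hall] := sdec_cons Hs.
rewrite /=; case Hph: (p h).
  case: i Hi => [|[|i]] // _; rewrite /has_ent /ent /=.
  by rewrite add1n ltnS IH.
have -> : count p t = 0.
  apply/eqP; rewrite -leqn0 leqNgt -has_count; apply/hasP => -[v Hv Hpv].
  move/allP: Hall => /(_ v Hv) Hvh.
  by move: (Hp v h (ltnW Hvh) Hpv); rewrite Hph.
rewrite leqn0; case: i Hi => // i _ /=.
case Hhe: (has_ent (h :: t) i.+1) => //=.
have := ent_mem Hhe; rewrite in_cons => /orP[/eqP->|Hv]; first by rewrite Hph.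
move/allP: Hall => /(_ _ Hv) Hvh.
symmetry; apply/negbTE/negP => Hpv; by move: (Hp _ h (ltnW Hvh) Hpv); rewrite Hph.
Qed.

Lemma ent_lt_ent s i j : strict_decr s -> 0 < i -> i < j -> j <= size s -> ent s j < ent s i.
Proof.
move=> Hs Hi Hij Hj; rewrite /ent.
have H := sorted_ltn_nth trans_gt 0 Hs.
apply: (H i.-1 j.-1); rewrite ?inE; lia.
Qed.

Lemma count_ge_ent s i : strict_decr s -> 0 < i <= size s ->
  count (fun v => ent s i <= v) s = i.
Proof.
move=> Hs /andP[Hi Hi2].
have Hp : forall v w, v <= w -> ent s i <= v -> ent s i <= w by move=> v w; lia.
have H1 : i <= count (fun v => ent s i <= v) s by rewrite idx_count // /has_ent Hi Hi2 leqnn.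
have H2 : ~~ (i.+1 <= count (fun v => ent s i <= v) s).
  rewrite idx_count //; apply/negP => /andP[/andP[_ H3] H4].
  have := ent_lt_ent Hs Hi (ltnSn i) H3; lia.
lia.
Qed.

Lemma count_gt_ent s i : strict_decr s -> 0 < i <= size s ->
  count (fun v => ent s i < v) s = i.-1.
Proof.
case: i => [|j] //= Hs Hi2.
have Hp : forall v w, v <= w -> ent s j.+1 < v -> ent s j.+1 < w by move=> v w; lia.
have H2 : ~~ (j.+1 <= count (fun v => ent s j.+1 < v) s).
  by rewrite idx_count // ltnn andbF.
have H1 : j <= count (fun v => ent s j.+1 < v) s.
  case: j Hi2 Hp H2 => [|j] // Hi2 Hp H2.
  rewrite idx_count //; apply/andP; split; first by rewrite /has_ent; apply/andP; split => //; lia.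
  apply: ent_lt_ent => //.
lia.
Qed.

Definition cntf (f : nat -> nat) (s : seq nat) (t : nat) := count (fun v => t < f v) s.

Section Alt.
Variables (fX fY : nat -> nat).
Hypothesis HfX : forall u v, (fX u < fX v) = (u < v).
Hypothesis HfY : forall u v, (fY u < fY v) = (u < v).
Hypothesis Hne : forall u v, fX u != fY v.
Hypothesis HposX : forall v, 0 < fX v.
Hypothesis HposY : forall v, 0 < fY v.

Lemma leX u v : (fX u <= fX v) = (u <= v).
Proof. by rewrite leqNgt HfX -leqNgt. Qed.
Lemma leY u v : (fY u <= fY v) = (u <= v).
Proof. by rewrite leqNgt HfY -leqNgt. Qed.

Lemma upX t : forall v w, v <= w -> t < fX v -> t < fX w.
Proof. move=> v w Hvw H; rewrite -leX in Hvw; lia. Qed.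
Lemma upY t : forall v w, v <= w -> t < fY v -> t < fY w.
Proof. move=> v w Hvw H; rewrite -leY in Hvw; lia. Qed.

Lemma cntY_pred Y y : strict_decr Y -> forall i, 0 < i <= size Y -> y = ent Y i ->
  cntf fY Y (fY y).-1 = i /\ cntf fY Y (fY y) = i.-1.
Proof.
move=> HY i Hi ->; split.
  rewrite /cntf -[RHS](count_ge_ent HY Hi); apply: eq_count => v /=.
  rewrite -(leY (ent Y i) v); move: (HposY (ent Y i)); by case: (fY (ent Y i)).
by rewrite /cntf -[RHS](count_gt_ent HY Hi); apply: eq_count => v /=; rewrite HfY.
Qed.

Lemma cntX_pred X x : strict_decr X -> forall i, 0 < i <= size X -> x = ent X i ->
  cntf fX X (fX x).-1 = i /\ cntf fX X (fX x) = i.-1.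
Proof.
move=> HX i Hi ->; split.
  rewrite /cntf -[RHS](count_ge_ent HX Hi); apply: eq_count => v /=.
  rewrite -(leX (ent X i) v); move: (HposX (ent X i)); by case: (fX (ent X i)).
by rewrite /cntf -[RHS](count_gt_ent HX Hi); apply: eq_count => v /=; rewrite HfX.
Qed.

Lemma alt1 X Y : strict_decr X -> strict_decr Y -> size X <= (size Y).+1 ->
 (forall i, 0 < i <= size Y ->
    (has_ent X i && (fY (ent Y i) < fX (ent X i))) &&
    (~~ has_ent X i.+1 || (fX (ent X i.+1) < fY (ent Y i)))) <->
 (forall t, cntf fY Y t <= cntf fX X t <= (cntf fY Y t).+1).
Proof.
move=> HX HY Hsz.
have IX := fun t i => idx_count (p := fun v => t < fX v) HX (@upX t) (i := i).
have IY := fun t i => idx_count (p := fun v => t < fY v) HY (@upY t) (i := i).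
split.
  move=> H t; apply/andP; split.
    case Ei: (cntf fY Y t) => [|i] //.
    have := IY t i.+1 isT; rewrite -/(cntf fY Y t) Ei leqnn => /esym/andP[He Ht].
    have /andP[/andP[HXe HXlt] _] := H i.+1 He.
    rewrite /cntf IX // HXe /=; lia.
  rewrite leqNgt; apply/negP => Hlt.
  case Ej: (cntf fX X t) Hlt => [|[|j]] // Hlt.
  have := IX t j.+2 isT; rewrite -/(cntf fX X t) Ej leqnn => /esym/andP[He Ht].
  have Hj : 0 < j.+1 <= size Y by move: He; rewrite /has_ent; lia.
  have /andP[_ H2] := H j.+1 Hj; rewrite He /= in H2.
  have : j.+1 <= cntf fY Y t by rewrite /cntf IY //; rewrite /has_ent Hj /=; lia.
  lia.
move=> H [|i] Hi //.
have [E1 E2] := cntY_pred HY Hi (erefl (ent Y i.+1)).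
apply/andP; split.
  have := H (fY (ent Y i.+1)).-1; rewrite E1 => /andP[H1 _].
  move: H1; rewrite /cntf IX //.
  case/andP => -> H3 /=.
  have := Hne (ent X i.+1) (ent Y i.+1); move: H3; case: (fY (ent Y i.+1)) => //= n; lia.
have := H (fY (ent Y i.+1)); rewrite E2 => /andP[_ H1].
have H3 : ~~ (i.+2 <= cntf fX X (fY (ent Y i.+1))) by simpl in H1; lia.
move: H3; rewrite /cntf IX //; case: (has_ent X i.+2) => //= H3.
have := Hne (ent X i.+2) (ent Y i.+1); lia.
Qed.

Lemma alt2 X Y : strict_decr X -> strict_decr Y -> size Y <= size X ->
 (forall i, 0 < i <= size X ->
    ((i == 1) || (has_ent Y i.-1 && (fX (ent X i) < fY (ent Y i.-1)))) &&
    (~~ has_ent Y i || (fY (ent Y i) < fX (ent X i)))) <->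
 (forall t, cntf fY Y t <= cntf fX X t <= (cntf fY Y t).+1).
Proof.
move=> HX HY Hsz.
have IX := fun t i => idx_count (p := fun v => t < fX v) HX (@upX t) (i := i).
have IY := fun t i => idx_count (p := fun v => t < fY v) HY (@upY t) (i := i).
split.
  move=> H t; apply/andP; split.
    case Ei: (cntf fY Y t) => [|i] //.
    have := IY t i.+1 isT; rewrite -/(cntf fY Y t) Ei leqnn => /esym/andP[He Ht].
    have Hi : 0 < i.+1 <= size X by move: He; rewrite /has_ent; lia.
    have /andP[_ H2] := H i.+1 Hi; rewrite He /= in H2.
    rewrite /cntf IX // /has_ent Hi /=; lia.
  rewrite leqNgt; apply/negP => Hlt.
  case Ej: (cntf fX X t) Hlt => [|[|j]] // Hlt.
  have := IX t j.+2 isT; rewrite -/(cntf fX X t) Ej leqnn => /esym/andP[He Ht].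
  have /andP[H2 _] := H j.+2 He; move: H2 => /= /andP[He2 H2].
  have : j.+1 <= cntf fY Y t by rewrite /cntf IY // He2 /=; lia.
  lia.
move=> H [|i] Hi //.
have [E1 E2] := cntX_pred HX Hi (erefl (ent X i.+1)).
apply/andP; split.
  case: i Hi E1 E2 => [|i] // Hi E1 E2.
  have := H (fX (ent X i.+2)).-1; rewrite E1 => /andP[_ H1].
  have : i.+1 <= cntf fY Y (fX (ent X i.+2)).-1 by lia.
  rewrite /cntf IY // => /andP[-> H3] /=.
  have := Hne (ent X i.+2) (ent Y i.+1); move: H3; case: (fX (ent X i.+2)) => //= n; lia.
have := H (fX (ent X i.+1)); rewrite E2 => /andP[H1 _].
have H3 : ~~ (i.+1 <= cntf fY Y (fX (ent X i.+1))) by simpl in H1; lia.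
move: H3; rewrite /cntf IY //.
case: (has_ent Y i.+1) => //= H3.
have := Hne (ent X i.+1) (ent Y i.+1); lia.
Qed.

End Alt.

Definition ALT (f g : nat -> nat) := forall t, g t <= f t <= (g t).+1.
Definition Bp (fA fB fC fD : nat -> nat) :=
  [/\ fC 0 + fA 0 = (fD 0 + fB 0).+1, ALT fA fD & ALT fC fB].

Definition f1 (v : nat) := v.*2.+1.
Definition f2 (v : nat) := v.*2.+2.
Definition fL (m m' : nat) := if m' == m then f1 else f2.
Definition fL' (m m' : nat) := if m' == m then f2 else f1.

Lemma f1_mono u v : (f1 u < f1 v) = (u < v).
Proof. rewrite /f1; apply/idP/idP; lia. Qed.
Lemma f2_mono u v : (f2 u < f2 v) = (u < v).
Proof. rewrite /f2; apply/idP/idP; lia. Qed.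
Lemma f12_ne u v : f1 u != f2 v.
Proof. rewrite /f1 /f2; apply/eqP; lia. Qed.
Lemma f21_ne u v : f2 u != f1 v.
Proof. rewrite /f1 /f2; apply/eqP; lia. Qed.

Lemma LA u v : (f2 v < f1 u) = (v < u). Proof. rewrite /f1 /f2; apply/idP/idP; lia. Qed.
Lemma LB u v : (f1 u < f2 v) = (u <= v). Proof. rewrite /f1 /f2; apply/idP/idP; lia. Qed.
Lemma LC u v : (f1 v < f2 u) = (v <= u). Proof. rewrite /f1 /f2; apply/idP/idP; lia. Qed.
Lemma LD u v : (f2 u < f1 v) = (u < v). Proof. rewrite /f1 /f2; apply/idP/idP; lia. Qed.

Lemma forall_iff (R : nat -> Prop) (P Q : nat -> bool) :
  (forall i, R i -> P i = Q i) -> ((forall i, R i -> P i) <-> (forall i, R i -> Q i)).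
Proof. by move=> H; split => H1 i Hi; [rewrite -H | rewrite H] => //; apply: H1. Qed.

Lemma cntf_size f s : (forall v, 0 < f v) -> cntf f s 0 = size s.
Proof. by move=> Hf; rewrite /cntf -count_predT; apply: eq_count => v; rewrite Hf. Qed.

Lemma BplusE m m' a' b' c' d' : (m' = m \/ m' = m.+1) ->
  strict_decr a' -> strict_decr b' -> strict_decr c' -> strict_decr d' ->
  size a' + size b' = (m + m).+1 -> size c' + size d' = m' + m' ->
  Bplus m m' (a', b') (c', d') <->
  Bp (cntf (fL m m') a') (cntf (fL m m') b') (cntf (fL' m m') c') (cntf (fL' m m') d').
Proof.
move=> Hm Ha Hb Hc Hd Hs1 Hs2.
rewrite /Bplus /Bp /defect /=.
have P1 : forall v, 0 < f1 v by [].
have P2 : forall v, 0 < f2 v by [].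
case: Hm => Em; subst m'.
  rewrite /fL /fL' eqxx !cntf_size //.
  split.
    case=> Hdef [H1 H2].
    have Hdef' : size c' + size a' = (size d' + size b').+1 by lia.
    split => //.
      apply: (proj1 (alt1 f1_mono f2_mono f12_ne P2 Ha Hd ltac:(lia))).
      move: H1; apply: (proj1 (forall_iff _)) => i _; by rewrite /ent_gt /ent_le ?LA ?LB.
    apply: (proj1 (alt2 f2_mono f1_mono f21_ne P2 Hc Hb ltac:(lia))).
    move: H2; apply: (proj1 (forall_iff _)) => i _; by rewrite /ent_gt /ent_le ?LA ?LB.
  case=> Hdef H1 H2.
  split; first lia.
  split.
    move: (proj2 (alt1 f1_mono f2_mono f12_ne P2 Ha Hd ltac:(lia)) H1).
    apply: (proj1 (forall_iff _)) => i _; by rewrite /ent_gt /ent_le ?LA ?LB.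
  move: (proj2 (alt2 f2_mono f1_mono f21_ne P2 Hc Hb ltac:(lia)) H2).
  apply: (proj1 (forall_iff _)) => i _; by rewrite /ent_gt /ent_le ?LA ?LB.
have E : (m.+1 == m) = false by elim: m {Hs1 Hs2}.
rewrite /fL /fL' E eqxx !cntf_size //.
split.
  case=> Hdef [H1 H2].
  have Hdef' : size c' + size a' = (size d' + size b').+1 by lia.
  split => //.
    apply: (proj1 (alt1 f2_mono f1_mono f21_ne P1 Ha Hd ltac:(lia))).
    move: H1; apply: (proj1 (forall_iff _)) => i _; by rewrite /ent_ge /ent_lt ?LC ?LD.
  apply: (proj1 (alt2 f1_mono f2_mono f12_ne P1 Hc Hb ltac:(lia))).
  move: H2; apply: (proj1 (forall_iff _)) => i _; by rewrite /ent_ge /ent_lt ?LC ?LD.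
case=> Hdef H1 H2.
split; first lia.
split.
  move: (proj2 (alt1 f2_mono f1_mono f21_ne P1 Ha Hd ltac:(lia)) H1).
  apply: (proj1 (forall_iff _)) => i _; by rewrite /ent_ge /ent_lt ?LC ?LD.
move: (proj2 (alt2 f1_mono f2_mono f12_ne P1 Hc Hb ltac:(lia)) H2).
apply: (proj1 (forall_iff _)) => i _; by rewrite /ent_ge /ent_lt ?LC ?LD.
Qed.

Lemma count_disj (p q r : pred nat) s : (forall w, p w = q w || r w) ->
  (forall w, ~~ (q w && r w)) -> count p s = count q s + count r s.
Proof.
move=> H1 H2; elim: s => //= w s ->; rewrite H1; move: (H2 w).
case: (q w); case: (r w) => //= _; lia.
Qed.

Section Univ.
Variable K : nat.
Definition cnt (F : pred nat) t := count (fun w => F w && (t < w)) (iota 0 K).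

Lemma count_single (p : pred nat) x : (forall w, p w -> w = x) -> x < K ->
  count p (iota 0 K) = p x.
Proof.
move=> H Hx.
transitivity (count (fun w => (w == x) && p x) (iota 0 K)).
  apply: eq_count => w /=; case: (eqVneq w x) => [->//|ne].
  by case Hp: (p w) => //; move: (H _ Hp) ne => ->; rewrite eqxx.
case: (p x); last first.
  by rewrite (eq_count (a2 := pred0)) ?count_pred0 // => w /=; rewrite andbF.
rewrite (eq_count (a2 := pred1 x)); last by move=> w /=; rewrite andbT.
by rewrite (count_uniq_mem x (iota_uniq 0 K)) mem_iota /= add0n Hx.
Qed.

Lemma cnt_split F t1 t2 : t1 <= t2 ->
  cnt F t1 = cnt F t2 + count (fun w => F w && (t1 < w) && (w <= t2)) (iota 0 K).
Proof.
move=> H; apply: count_disj => w.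
  by case: (F w) => //=; apply/idP/idP; lia.
by case: (F w) => //=; apply/negP; lia.
Qed.

Lemma cnt_flat F t1 t2 : t1 <= t2 -> (forall w, t1 < w -> w <= t2 -> ~~ F w) ->
  cnt F t1 = cnt F t2.
Proof.
move=> H1 H2; rewrite (cnt_split F H1) (eq_count (a2 := pred0)) ?count_pred0 ?addn0 //.
move=> w /=; case Hw: (F w) => //=; apply/negP => /andP[A B].
by move: (H2 w A B); rewrite Hw.
Qed.

Lemma cnt_flat_inv F t1 t2 w : cnt F t1 = cnt F t2 -> t1 < w -> w <= t2 -> w < K -> ~~ F w.
Proof.
move=> E H1 H2 Hw; apply/negP => Fw.
have Ht : t1 <= t2 by lia.
move: E; rewrite (cnt_split F Ht) => E.
have : 0 < count (fun w => F w && (t1 < w) && (w <= t2)) (iota 0 K).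
  rewrite -has_count; apply/hasP; exists w; first by rewrite mem_iota.
  by rewrite Fw H1 H2.
lia.
Qed.

Lemma cnt_mono F t1 t2 : t1 <= t2 -> cnt F t2 <= cnt F t1.
Proof. by move=> H; rewrite (cnt_split F H) leq_addr. Qed.

Lemma cnt_tog (F F' : pred nat) lo hi : 0 < lo -> lo < hi -> hi < K ->
  (forall w, w != lo -> w != hi -> F' w = F w) ->
  (forall w, lo < w -> w < hi -> ~~ F w) ->
  F hi -> ~~ F lo -> ~~ F' hi -> F' lo ->
  [/\ forall t, (hi <= t) || (t < lo) -> cnt F' t = cnt F t,
      forall t, lo.-1 <= t -> t < hi -> cnt F t = (cnt F hi).+1 &
      forall t, lo <= t -> t <= hi -> cnt F' t = cnt F' hi].
Proof.
move=> H0 Hlh HK Hag Hmid Fhi Flo F'hi F'lo.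
have Emid : forall t, lo.-1 <= t -> t < hi -> cnt F t = (cnt F hi).+1.
  move=> t H1 H2; rewrite (cnt_split F (ltnW H2)) (count_single (x := hi)) //.
    by rewrite Fhi H2 leqnn addn1.
  move=> w /andP[/andP[Fw Hw1] Hw2].
  case: (ltnP w hi) => Hw3; last lia.
  case: (eqVneq w lo) => [Ew|Nw]; first by move: Fw; rewrite Ew (negbTE Flo).
  by move: (Hmid w ltac:(lia) Hw3); rewrite Fw.
have Eout : forall t, hi <= t -> cnt F' t = cnt F t.
  move=> t Ht; apply: eq_count => w /=; case: (ltnP t w) => Hw; last by rewrite !andbF.
  by rewrite Hag //; apply/eqP; lia.
split => //.
- move=> t /orP[Ht|Ht]; first exact: Eout.
  have Ht2 : t <= lo.-1 by lia.
  rewrite (cnt_split F Ht2) (cnt_split F' Ht2).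
  have -> : count (fun w => F' w && (t < w) && (w <= lo.-1)) (iota 0 K) =
            count (fun w => F w && (t < w) && (w <= lo.-1)) (iota 0 K).
    apply: eq_count => w /=; case: (leqP w lo.-1) => Hw; last by rewrite !andbF.
    by rewrite Hag //; apply/eqP; lia.
  congr addn.
  have Hl : lo.-1 <= hi by lia.
  rewrite (cnt_split F' Hl) (count_single (x := lo)); last lia; last first.
    move=> w /andP[/andP[Fw Hw1] Hw2].
    case: (eqVneq w lo) => [//|Nw]; case: (eqVneq w hi) => [Ew|Nhw].
      by move: Fw; rewrite Ew (negbTE F'hi).
    by move: (Hmid w ltac:(lia) ltac:(lia)); rewrite -Hag // Fw.
  rewrite F'lo Eout // (Emid lo.-1) //; last lia.
  have -> : (lo.-1 < lo) && (lo <= hi) by apply/andP; split; lia.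
  by rewrite addn1.
- move=> t H1 H2; apply: cnt_flat => // w Hw1 Hw2.
  case: (eqVneq w hi) => [->//|Nhw].
  by rewrite Hag; [apply: Hmid; lia | apply/eqP; lia | done].
Qed.

Lemma cnt_same (F : pred nat) lo hi : 0 < lo -> lo < hi -> hi < K ->
  (forall w, lo < w -> w < hi -> ~~ F w) -> F hi -> F lo ->
  cnt F lo.-1 = (cnt F hi).+2.
Proof.
move=> H0 Hlh HK Hmid Fhi Flo.
have Hl : lo.-1 <= hi by lia.
rewrite (cnt_split F Hl).
rewrite (count_disj (q := fun w => F w && (w == lo)) (r := fun w => F w && (w == hi))).
- rewrite (count_single (x := lo)); last lia; last by move=> w /andP[_ /eqP].
  rewrite (count_single (x := hi)) //; last by move=> w /andP[_ /eqP].
  by rewrite Flo Fhi !eqxx addn2.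
- move=> w /=; case Fw: (F w) => //=.
  case: (eqVneq w lo) => [->|Nl]; first by apply/idP/idP; lia.
  case: (eqVneq w hi) => [->|Nh]; first by apply/idP/idP; lia.
  apply/negbTE/negP => /andP[H1 H2].
  by move: (Hmid w ltac:(lia) ltac:(lia)); rewrite Fw.
- move=> w /=; case: (F w) => //=; apply/negP => /andP[/eqP -> /eqP]; lia.
Qed.

End Univ.

Lemma phi_tog (f f' g : nat -> nat) lo hi (Phi : nat -> nat -> Prop) : 0 < lo -> lo < hi ->
 (forall t, (hi <= t) || (t < lo) -> f' t = f t) ->
 (forall t, lo.-1 <= t -> t < hi -> f t = (f hi).+1) ->
 (forall t, lo <= t -> t <= hi -> f' t = f' hi) ->
 (forall t, lo.-1 <= t -> t <= hi -> g t = g hi) ->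
 (forall t, Phi (g t) (f t)) <-> (forall t, Phi (g t) (f' t)).
Proof.
move=> H0 Hlh Hout Hf Hf' Hg; split=> H t.
  case: (boolP ((hi <= t) || (t < lo))) => Ht; first by rewrite Hout.
  rewrite Hf' ?Hg; try lia.
  by rewrite Hout ?leqnn //; apply: H.
case: (boolP ((hi <= t) || (t < lo))) => Ht; first by rewrite -Hout.
rewrite Hf ?Hg; try lia.
have E : f lo.-1 = (f hi).+1 by apply: Hf; lia.
rewrite -E -(Hout lo.-1); last by apply/orP; right; lia.
rewrite -(Hg lo.-1) //; lia.
Qed.

Section Core.
Variable K : nat.
Local Notation cnt := (cnt K).

Lemma tog_vals (F F' : pred nat) lo hi : 0 < lo -> lo < hi -> hi < K ->
  (forall w, w != lo -> w != hi -> F' w = F w) ->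
  (forall w, lo < w -> w < hi -> ~~ F w) ->
  F hi -> ~~ F lo -> ~~ F' hi -> F' lo ->
  [/\ cnt F lo.-1 = (cnt F hi).+1, cnt F lo = (cnt F hi).+1, cnt F hi.-1 = (cnt F hi).+1,
      cnt F' lo.-1 = (cnt F hi).+1 &
      [/\ cnt F' lo = cnt F hi, cnt F' hi.-1 = cnt F hi & cnt F' hi = cnt F hi]].
Proof.
move=> H0 Hlh HK Hag Hmid a b c d.
have [T1 T2 T3] := cnt_tog H0 Hlh HK Hag Hmid a b c d.
have E : cnt F' hi = cnt F hi by apply: T1; rewrite leqnn.
have X1 : lo.-1 <= lo.-1 by [].
have X2 : lo.-1 < hi by lia.
have X3 : lo.-1 <= lo by lia.
have X4 : lo.-1 <= hi.-1 by lia.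
have X5 : hi.-1 < hi by lia.
have X6 : lo <= hi.-1 by lia.
have X7 : (hi <= lo.-1) || (lo.-1 < lo) by apply/orP; right; lia.
split.
- exact: T2.
- exact: T2.
- exact: T2.
- by rewrite T1 // T2.
split.
- by rewrite T3 // ltnW.
- by rewrite T3 // ltnW.
- exact: E.
Qed.

Lemma flat_vals (G : pred nat) lo hi : 0 < lo -> lo < hi ->
  (forall w, lo <= w -> w <= hi -> ~~ G w) ->
  forall t, lo.-1 <= t -> t <= hi -> cnt G t = cnt G hi.
Proof.
move=> H0 Hlh HG t H1 H2; apply: cnt_flat => // w Hw1 Hw2; apply: HG; lia.
Qed.

Lemma Bp_iff fA fB fC fD fA' fB' fC' fD' :
  (fC 0 + fA 0 = (fD 0 + fB 0).+1 <-> fC' 0 + fA' 0 = (fD' 0 + fB' 0).+1) ->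
  (ALT fA fD <-> ALT fA' fD') -> (ALT fC fB <-> ALT fC' fB') ->
  Bp fA fB fC fD <-> Bp fA' fB' fC' fD'.
Proof.
move=> H1 H2 H3; split; case=> X Y Z; split; by [apply/H1 | apply/H2 | apply/H3].
Qed.

Lemma Bp_sym fA fB fC fD : Bp fA fB fC fD <-> Bp fC fD fA fB.
Proof. split; case=> X Y Z; split => //; lia. Qed.

Lemma core (A B C D C' D' : pred nat) lo hi :
  0 < lo -> lo < hi -> hi < K ->
  (forall w, lo <= w -> w <= hi -> ~~ A w && ~~ B w) ->
  (forall w, lo < w -> w < hi -> ~~ C w && ~~ D w) ->
  (forall w, w != lo -> w != hi -> C' w = C w /\ D' w = D w) ->
  C' lo = D lo -> C' hi = D hi -> D' lo = C lo -> D' hi = C hi ->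
  C lo != D lo -> C hi != D hi ->
  Bp (cnt A) (cnt B) (cnt C) (cnt D) <-> Bp (cnt A) (cnt B) (cnt C') (cnt D').
Proof.
move=> H0 Hlh HK HAB HCD Hag E1 E2 E3 E4 N1 N2.
have fA := flat_vals H0 Hlh (fun w a b => proj1 (andP (HAB w a b))).
have fB := flat_vals H0 Hlh (fun w a b => proj2 (andP (HAB w a b))).
have mC : forall w, lo < w -> w < hi -> ~~ C w by move=> w a b; case/andP: (HCD w a b).
have mD : forall w, lo < w -> w < hi -> ~~ D w by move=> w a b; case/andP: (HCD w a b).
have agC : forall w, w != lo -> w != hi -> C' w = C w by move=> w a b; case: (Hag w a b).
have agD : forall w, w != lo -> w != hi -> D' w = D w by move=> w a b; case: (Hag w a b).
have agD' : forall w, w != lo -> w != hi -> D w = D' w by move=> w a b; rewrite agD.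
have agC' : forall w, w != lo -> w != hi -> C w = C' w by move=> w a b; rewrite agC.
have mC' : forall w, lo < w -> w < hi -> ~~ C' w.
  move=> w a b; rewrite agC; [exact: mC | by rewrite gtn_eqF | by rewrite ltn_eqF].
have mD' : forall w, lo < w -> w < hi -> ~~ D' w.
  move=> w a b; rewrite agD; [exact: mD | by rewrite gtn_eqF | by rewrite ltn_eqF].
have Hlo0 : (hi <= 0) || (0 < lo) by rewrite H0 orbT.
case HC: (C hi); case HCl: (C lo).
-
  have sC := cnt_same H0 Hlh HK mC HC HCl.
  have sD' : cnt D' lo.-1 = (cnt D' hi).+2 by apply: cnt_same => //; rewrite ?E3 ?E4.
  split; case=> _ X Y; exfalso.
    move: (Y lo.-1) (Y hi); rewrite sC (fB lo.-1) //; lia.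
  move: (X lo.-1) (X hi); rewrite sD' (fA lo.-1) //; lia.
- have Dlo : D lo by move: N1; rewrite HCl; case: (D lo).
  have Dhi : ~~ D hi by move: N2; rewrite HC; case: (D hi).
  have [T1 T2 T3] := cnt_tog H0 Hlh HK agC mC HC (negbT HCl) ltac:(by rewrite E2) ltac:(by rewrite E1).
  have [U1 U2 U3] := cnt_tog H0 Hlh HK agD' mD' ltac:(by rewrite E4) ltac:(by rewrite E3 HCl) Dhi Dlo.
  apply: Bp_iff.
  + by rewrite T1 // -(U1 0) //.
  + apply: iff_sym; exact: (phi_tog (fun g f => f <= g <= f.+1) H0 Hlh U1 U2 U3 fA).
  + exact: (phi_tog (fun g f => g <= f <= g.+1) H0 Hlh T1 T2 T3 fB).
- have Dlo : ~~ D lo by move: N1; rewrite HCl; case: (D lo).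
  have Dhi : D hi by move: N2; rewrite HC; case: (D hi).
  have [T1 T2 T3] := cnt_tog H0 Hlh HK agC' mC' ltac:(by rewrite E2) ltac:(by rewrite E1) (negbT HC) HCl.
  have [U1 U2 U3] := cnt_tog H0 Hlh HK agD mD Dhi Dlo ltac:(by rewrite E4 HC) ltac:(by rewrite E3).
  apply: Bp_iff.
  + by rewrite -(T1 0) // U1.
  + exact: (phi_tog (fun g f => f <= g <= f.+1) H0 Hlh U1 U2 U3 fA).
  + apply: iff_sym; exact: (phi_tog (fun g f => g <= f <= g.+1) H0 Hlh T1 T2 T3 fB).
- have Dlo : D lo by move: N1; rewrite HCl; case: (D lo).
  have Dhi : D hi by move: N2; rewrite HC; case: (D hi).
  have sD := cnt_same H0 Hlh HK mD Dhi Dlo.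
  have sC' : cnt C' lo.-1 = (cnt C' hi).+2 by apply: cnt_same => //; rewrite ?E1 ?E2.
  split; case=> _ X Y; exfalso.
    move: (X lo.-1) (X hi); rewrite sD (fA lo.-1) //; lia.
  move: (Y lo.-1) (Y hi); rewrite sC' (fB lo.-1) //; lia.
Qed.

End Core.

Section NoFixed.
Variable K : nat.
Local Notation cnt := (cnt K).

Lemma nofixed (A B C D C2 D2 : pred nat) lo hi :
 0 < lo -> lo < hi -> hi < K ->
 (forall t, cnt B t <= cnt A t <= (cnt B t).+1) ->
 (forall t, cnt D t <= cnt C t <= (cnt D t).+1) ->
 ~~ A lo -> ~~ A hi -> ~~ B lo -> ~~ B hi ->
 (forall w, lo < w -> w < hi -> ~~ C w && ~~ D w) ->
 (forall w, w != lo -> w != hi -> C2 w = C w /\ D2 w = D w) ->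
 C2 lo = D lo -> C2 hi = D hi -> D2 lo = C lo -> D2 hi = C hi ->
 (C hi && D lo && ~~ C lo && ~~ D hi) || (D hi && C lo && ~~ D lo && ~~ C hi) ->
 ALT (cnt A) (cnt D2) -> ALT (cnt C2) (cnt B) ->
 forall w, lo <= w -> w <= hi -> ~~ A w && ~~ B w.
Proof.
move=> H0 Hlh HK WAB WCD Alo Ahi Blo Bhi HCD Hag E1 E2 E3 E4 Hor AL1 AL2.
have mC : forall w, lo < w -> w < hi -> ~~ C w by move=> w a b; case/andP: (HCD w a b).
have mD : forall w, lo < w -> w < hi -> ~~ D w by move=> w a b; case/andP: (HCD w a b).
have agC : forall w, w != lo -> w != hi -> C2 w = C w by move=> w a b; case: (Hag w a b).
have agD : forall w, w != lo -> w != hi -> D2 w = D w by move=> w a b; case: (Hag w a b).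
have agD' : forall w, w != lo -> w != hi -> D w = D2 w by move=> w a b; rewrite agD.
have agC' : forall w, w != lo -> w != hi -> C w = C2 w by move=> w a b; rewrite agC.
have mC' : forall w, lo < w -> w < hi -> ~~ C2 w.
  move=> w a b; rewrite agC; [exact: mC | by rewrite gtn_eqF | by rewrite ltn_eqF].
have mD' : forall w, lo < w -> w < hi -> ~~ D2 w.
  move=> w a b; rewrite agD; [exact: mD | by rewrite gtn_eqF | by rewrite ltn_eqF].
have pt : forall (F : pred nat) x, 0 < x -> ~~ F x -> cnt F x.-1 = cnt F x.
  move=> F x Hx Fx; apply: cnt_flat; first exact: leq_pred.
  by move=> w a b; have -> : w = x by clear -Hx a b; lia.
have A1 := pt A lo H0 Alo.
have Hhi0 : 0 < hi by clear -H0 Hlh; lia.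
have A2 := pt A hi Hhi0 Ahi.
have B1 := pt B lo H0 Blo.
have B2 := pt B hi Hhi0 Bhi.
have MA : cnt A hi <= cnt A lo by apply: cnt_mono; exact: ltnW.
have MB : cnt B hi <= cnt B lo by apply: cnt_mono; exact: ltnW.
have W1 := WAB lo. have W2 := WAB hi.
have W3 := WCD hi.-1. have W4 := WCD hi.
have L1 := AL1 lo.-1. have L2 := AL1 lo. have L3 := AL1 hi.-1. have L4 := AL1 hi.
have L5 := AL2 lo.-1. have L6 := AL2 lo. have L7 := AL2 hi.-1. have L8 := AL2 hi.
suff [S1 S2] : cnt A lo.-1 = cnt A hi /\ cnt B lo.-1 = cnt B hi.
  move=> w Hw1 Hw2; have Hw3 : lo.-1 < w by clear -Hw1 H0; lia.
  have Hw4 : w < K by clear -Hw2 HK; lia.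
  by rewrite (cnt_flat_inv S1) ?(cnt_flat_inv S2).
case/orP: Hor => /andP[/andP[/andP[Chi Dlo] Clo] Dhi].
  have [T1 T2 T3 T4 [T5 T6 T7]] := tog_vals H0 Hlh HK agC mC Chi Clo ltac:(by rewrite E2) ltac:(by rewrite E1).
  have [U1 U2 U3 U4 [U5 U6 U7]] := tog_vals H0 Hlh HK agD' mD' ltac:(by rewrite E4) ltac:(by rewrite E3) Dhi Dlo.
  clear -A1 A2 B1 B2 MA MB W1 W2 W3 W4 L1 L2 L3 L4 L5 L6 L7 L8 T1 T2 T3 T4 T5 T6 T7 U1 U2 U3 U4 U5 U6 U7; lia.
have [T1 T2 T3 T4 [T5 T6 T7]] := tog_vals H0 Hlh HK agC' mC' ltac:(by rewrite E2) ltac:(by rewrite E1) Dhi Dlo.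
have [U1 U2 U3 U4 [U5 U6 U7]] := tog_vals H0 Hlh HK agD mD Chi Clo ltac:(by rewrite E4) ltac:(by rewrite E3).
clear -A1 A2 B1 B2 MA MB W1 W2 W3 W4 L1 L2 L3 L4 L5 L6 L7 L8 T1 T2 T3 T4 T5 T6 T7 U1 U2 U3 U4 U5 U6 U7; lia.
Qed.
End NoFixed.

Lemma weak_count X Y : strict_decr X -> strict_decr Y ->
  size Y <= size X -> size X <= (size Y).+1 ->
  (forall i, 1 <= i <= size Y -> ent Y i <= ent X i /\ ent X i.+1 <= ent Y i) ->
  forall p : pred nat, (forall v w, v <= w -> p v -> p w) ->
  count p Y <= count p X <= (count p Y).+1.
Proof.
move=> HX HY S1 S2 H p Hp.
apply/andP; split.
  case Ei: (count p Y) => [|i] //.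
  have := idx_count HY Hp (i := i.+1) isT; rewrite Ei leqnn => /esym/andP[He Hpi].
  have [H1 _] := H i.+1 He.
  rewrite idx_count //; apply/andP; split; last exact: Hp Hpi.
  move: He; rewrite /has_ent => /andP[_ He]; apply/andP; split => //; exact: leq_trans S1.
rewrite leqNgt; apply/negP => Hlt.
case Ej: (count p X) Hlt => [|[|j]] // Hlt.
have := idx_count HX Hp (i := j.+2) isT; rewrite Ej leqnn => /esym/andP[He Hpj].
have Hj : 1 <= j.+1 <= size Y by move: He S2; rewrite /has_ent; clear; lia.
have [_ H2] := H j.+1 Hj.
have : j.+1 <= count p Y.
  by rewrite idx_count //; rewrite /has_ent; apply/andP; split; [exact: Hj | exact: Hp H2 Hpj].
clear -Hlt; lia.
Qed.

Lemma count_le_lt (s : seq nat) v : uniq s ->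
  count (fun w => v <= w) s = count (fun w => v < w) s + (v \in s).
Proof.
move=> Hu; rewrite -(count_uniq_mem v Hu); apply: count_disj => w /=.
  by rewrite leq_eqVlt orbC eq_sym.
by apply/negP => /andP[H1 /eqP H2]; subst; rewrite ltnn in H1.
Qed.

Lemma between X Y k l : strict_decr X -> strict_decr Y ->
  size Y <= size X -> size X <= (size Y).+1 ->
  (forall i, 1 <= i <= size Y -> ent Y i <= ent X i /\ ent X i.+1 <= ent Y i) ->
  has_ent X k -> has_ent Y l -> (l == k.-1) || (l == k) ->
  ent X k \notin Y -> ent Y l \notin X ->
  forall v : nat, (v \in X) || (v \in Y) ->
  ~~ ((minn (ent X k) (ent Y l) < v) && (v < maxn (ent X k) (ent Y l))).
Proof.
move=> HX HY S1 S2 H Hk Hl Hkl NX NY v Hv.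
have up1 : forall v0 v w, v <= w -> v0 < v -> v0 < w by move=> ? ? ?; lia.
have up2 : forall v0 v w, v <= w -> v0 <= v -> v0 <= w by move=> ? ? ?; lia.
pose p1 := fun w => v < w. pose p2 := fun w => v <= w.
have W1 : count p1 Y <= count p1 X <= (count p1 Y).+1 := weak_count HX HY S1 S2 H (up1 v).
have W2 : count p2 Y <= count p2 X <= (count p2 Y).+1 := weak_count HX HY S1 S2 H (up2 v).
have E1 : count p2 X = count p1 X + (v \in X) := count_le_lt v (sdec_uniq HX).
have E2 : count p2 Y = count p1 Y + (v \in Y) := count_le_lt v (sdec_uniq HY).
have IX1 : forall i, 0 < i -> (i <= count p1 X) = has_ent X i && p1 (ent X i) := fun i => idx_count HX (up1 v) (i := i).
have IX2 : forall i, 0 < i -> (i <= count p2 X) = has_ent X i && p2 (ent X i) := fun i => idx_count HX (up2 v) (i := i).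
have IY1 : forall i, 0 < i -> (i <= count p1 Y) = has_ent Y i && p1 (ent Y i) := fun i => idx_count HY (up1 v) (i := i).
have IY2 : forall i, 0 < i -> (i <= count p2 Y) = has_ent Y i && p2 (ent Y i) := fun i => idx_count HY (up2 v) (i := i).
have xX := ent_mem Hk. have yY := ent_mem Hl.
move: Hk Hl; rewrite /has_ent => /andP[k0 k1] /andP[l0 l1].
apply/negP => /andP[Hv1 Hv2].
case/orP: Hkl => /eqP El; subst l.
-
  have [_ Hxy] := H k.-1 ltac:(clear -k0 l0 l1; lia).
  rewrite (prednK k0) in Hxy.
  have Nxy : ent X k != ent Y k.-1 by apply/eqP => E; move: NX; rewrite E yY.
  have Lxy : ent X k < ent Y k.-1 by move: Hxy Nxy; clear; move: (ent X k) (ent Y _) => x y; lia.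
  have A1 : k.-1 <= count p1 Y.
    rewrite IY1 //; apply/andP; split; [by rewrite /has_ent l0 l1 | rewrite /p1 /p2; move: Hv2 Lxy; clear; move: (ent X k) (ent Y _) => x y; lia].
  have A2 : ~~ (k <= count p2 X).
    rewrite IX2 //; apply/negP => /andP[_ B]; move: Hv1 B Lxy; rewrite /p1 /p2; clear; move: (ent X k) (ent Y _) => x y; lia.
  case/orP: Hv => Hv; [rewrite Hv /= in E1 | rewrite Hv /= in E2]; clear -W1 W2 A1 A2 E1 E2 k0; lia.
-
  have [Hxy _] := H k ltac:(clear -k0 l1; lia).
  have Nxy : ent X k != ent Y k by apply/eqP => E; move: NX; rewrite E yY.
  have Lxy : ent Y k < ent X k by move: Hxy Nxy; clear; move: (ent X k) (ent Y _) => x y; lia.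
  have A1 : k <= count p1 X.
    rewrite IX1 //; apply/andP; split; [by rewrite /has_ent k0 k1 | rewrite /p1 /p2; move: Hv2 Lxy; clear; move: (ent X k) (ent Y _) => x y; lia].
  have A2 : ~~ (k <= count p2 Y).
    rewrite IY2 //; apply/negP => /andP[_ B]; move: Hv1 B Lxy; rewrite /p1 /p2; clear; move: (ent X k) (ent Y _) => x y; lia.
  have A3 : k <= count p2 X.
    rewrite IX2 //; apply/andP; split; [by rewrite /has_ent k0 k1 | rewrite /p1 /p2; move: Hv2 Lxy; clear; move: (ent X k) (ent Y _) => x y; lia].
  have A4 : ~~ (k <= count p1 Y).
    rewrite IY1 //; apply/negP => /andP[_ B]; move: Hv1 B Lxy; rewrite /p1 /p2; clear; move: (ent X k) (ent Y _) => x y; lia.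
  case/orP: Hv => Hv; [rewrite Hv /= in E1 | rewrite Hv /= in E2]; clear -W1 W2 A1 A2 A3 A4 E1 E2 k0; lia.
Qed.

Lemma mem_move1 (M : pred nat) X Y v :
  (v \in (move M (X, Y)).1) = if M v then v \in Y else v \in X.
Proof. by rewrite /move /= mem_sort mem_cat !mem_filter; case: (M v); rewrite /= ?orbF. Qed.

Lemma mem_move2 (M : pred nat) X Y v :
  (v \in (move M (X, Y)).2) = if M v then v \in X else v \in Y.
Proof. by rewrite /move /= mem_sort mem_cat !mem_filter; case: (M v); rewrite /= ?orbF. Qed.

Lemma pairwise_gt (s : seq nat) : uniq s -> pairwise (fun x y => y <= x) s ->
  pairwise (fun x y => y < x) s.
Proof.
elim: s => //= h t IH /andP[Hh Hu] /andP[Ha Hp]; rewrite IH // andbT.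
apply/allP => v Hv; move/allP: Ha => /(_ v Hv) H1.
have : v != h by apply/eqP => E; move: Hh; rewrite -E Hv.
rewrite neq_ltn => /orP[//|H2]; exfalso; move: H1 H2; clear; lia.
Qed.

Lemma sdec_sort (s : seq nat) : uniq s -> strict_decr (sort (fun x y => y <= x) s).
Proof.
move=> Hu.
have Ht : total (fun x y : nat => y <= x) by move=> x y; exact: leq_total.
have Htr : transitive (fun x y : nat => y <= x) by move=> x y z H1 H2; exact: leq_trans H2 H1.
have Hs := sort_sorted Ht s.
rewrite /strict_decr sorted_pairwise; last exact: trans_gt.
apply: pairwise_gt; first by rewrite sort_uniq.
by rewrite -sorted_pairwise.
Qed.

Lemma uniq_cf (M : pred nat) (X Y : seq nat) : uniq X -> uniq Y ->
  uniq ([seq x <- X | ~~ M x] ++ [seq x <- Y | M x]).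
Proof.
move=> HX HY; rewrite cat_uniq !filter_uniq // andbT /=.
apply/hasP => -[v]; rewrite !mem_filter => /andP[Mv _] /andP[nMv _].
by rewrite Mv in nMv.
Qed.

Lemma sdec_move (M : pred nat) X Y : strict_decr X -> strict_decr Y ->
  strict_decr (move M (X, Y)).1 /\ strict_decr (move M (X, Y)).2.
Proof.
move=> HX HY; have uX := sdec_uniq HX; have uY := sdec_uniq HY.
by split; apply: sdec_sort; apply: uniq_cf.
Qed.

Lemma size_move (M : pred nat) X Y :
  size (move M (X, Y)).1 + size (move M (X, Y)).2 = size X + size Y.
Proof.
rewrite /move /= !size_sort !size_cat !size_filter.
have E1 : count (fun x => M x) X + count (fun x => ~~ M x) X = size X := count_predC M X.
have E2 : count (fun x => M x) Y + count (fun x => ~~ M x) Y = size Y := count_predC M Y.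
lia.
Qed.

Definition rowpred (f : nat -> nat) (s : seq nat) : pred nat := fun w => w \in map f s.

Lemma rowpred_img f s v : injective f -> rowpred f s (f v) = (v \in s).
Proof. by move=> Hf; rewrite /rowpred mem_map. Qed.

Lemma rowpred_inv f s w : rowpred f s w -> exists2 v, v \in s & w = f v.
Proof. by move/mapP. Qed.

Lemma rowpred_other (f g : nat -> nat) s v : (forall u, f u != g v) -> rowpred f s (g v) = false.
Proof.
move=> Hne; apply/negbTE/negP => /mapP[u _ E].
by move: (Hne u); rewrite E eqxx.
Qed.

Lemma rowpred_agree f s1 s2 lo hi :
  (forall v, f v != lo -> f v != hi -> (v \in s1) = (v \in s2)) ->
  forall w, w != lo -> w != hi -> rowpred f s1 w = rowpred f s2 w.
Proof.
move=> H w Hl Hh; apply/idP/idP => /mapP[v Hv Ew]; subst w; apply/mapP; exists v => //.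
  by rewrite -H.
by rewrite H.
Qed.

Lemma count_univ K (s : seq nat) (p : pred nat) : uniq s -> (forall w, w \in s -> w < K) ->
  count p s = count (fun w => (w \in s) && p w) (iota 0 K).
Proof.
move=> Hu HK.
have Hp : perm_eq s [seq w <- iota 0 K | w \in s].
  apply: uniq_perm => //; first exact: filter_uniq (iota_uniq _ _).
  move=> w; rewrite mem_filter mem_iota /=; apply/idP/andP => [Hw|[]//]; split=> //.
  exact: HK.
rewrite (permP Hp) count_filter; apply: eq_count => w; by rewrite /= andbC.
Qed.

Lemma cntf_univ K f s : injective f -> uniq s -> (forall v, v \in s -> f v < K) ->
  forall t, cntf f s t = cnt K (rowpred f s) t.
Proof.
move=> Hf Hu HK t.
rewrite /cntf /cnt.
have -> : count (fun v => t < f v) s = count (fun w => t < w) (map f s) by rewrite count_map.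
apply: count_univ; first by rewrite map_inj_uniq.
by move=> w /mapP[v Hv ->]; apply: HK.
Qed.

Lemma ALT_ext f g f' g' : (forall t, f t = f' t) -> (forall t, g t = g' t) ->
  ALT f g <-> ALT f' g'.
Proof. by move=> H1 H2; split => H t; move: (H t); rewrite H1 H2. Qed.

Lemma Bp_ext fA fB fC fD gA gB gC gD :
  (forall t, fA t = gA t) -> (forall t, fB t = gB t) ->
  (forall t, fC t = gC t) -> (forall t, fD t = gD t) ->
  Bp fA fB fC fD <-> Bp gA gB gC gD.
Proof.
move=> HA HB HC HD; apply: Bp_iff; try exact: ALT_ext.
by rewrite HA HB HC HD.
Qed.

Lemma assembly K (fF fT : nat -> nat) (p q p' q' r s r1 s1 r2 s2 r3 s3 : seq nat)
  (N : pred nat) (x y lo hi : nat) :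
 injective fT ->
 (forall u v, fF u != fT v) ->
 0 < lo -> lo < hi -> hi < K ->
 (lo = fT x /\ hi = fT y) \/ (lo = fT y /\ hi = fT x) ->
 (forall t, cnt K (rowpred fF q) t <= cnt K (rowpred fF p) t <= (cnt K (rowpred fF q) t).+1) ->
 (forall t, cnt K (rowpred fT s) t <= cnt K (rowpred fT r) t <= (cnt K (rowpred fT s) t).+1) ->
 x \in r -> x \notin s -> y \in s -> y \notin r ->
 (forall v : nat, (v \in r) || (v \in s) -> ~~ ((lo < fT v) && (fT v < hi))) ->
 (forall v, v \in p' -> (v \in p) || (v \in q)) ->
 (forall v, v \in q' -> (v \in p) || (v \in q)) ->
 (forall v, v \in r1 = if N v then v \in s else v \in r) ->
 (forall v, v \in s1 = if N v then v \in r else v \in s) ->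
 (forall v, v \in r2 = if N v (+) ((v == x) || (v == y)) then v \in s else v \in r) ->
 (forall v, v \in s2 = if N v (+) ((v == x) || (v == y)) then v \in r else v \in s) ->
 (forall v, v \in r3 = if (v == x) || (v == y) then v \in s else v \in r) ->
 (forall v, v \in s3 = if (v == x) || (v == y) then v \in r else v \in s) ->
 ALT (cnt K (rowpred fF p)) (cnt K (rowpred fT s3)) ->
 ALT (cnt K (rowpred fT r3)) (cnt K (rowpred fF q)) ->
 Bp (cnt K (rowpred fF p')) (cnt K (rowpred fF q')) (cnt K (rowpred fT r1)) (cnt K (rowpred fT s1)) <->
 Bp (cnt K (rowpred fF p')) (cnt K (rowpred fF q')) (cnt K (rowpred fT r2)) (cnt K (rowpred fT s2)).
Proof.
move=> injT Hne H0 Hlh HK Hor WF WT xr xs ys yr Hbet Hp' Hq' Hr1 Hs1 Hr2 Hs2 Hr3 Hs3 AL1 AL2.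
have Plh : forall (P : nat -> Prop), (forall z, (z == x) || (z == y) -> P (fT z)) -> P lo /\ P hi.
  move=> P HP; case: Hor => -[-> ->]; split; apply: HP; by rewrite eqxx ?orbT.
have ptxy : forall v, fT v != lo -> fT v != hi -> ((v == x) || (v == y)) = false.
  move=> v H1 H2; apply/negbTE/negP => /orP[] /eqP E; subst v;
  case: Hor => -[E1 E2]; by [move: H1; rewrite E1 eqxx | move: H2; rewrite E2 eqxx].
have mid : forall s0 : seq nat, (forall v, v \in s0 -> (v \in r) || (v \in s)) ->
       forall w, lo < w -> w < hi -> ~~ rowpred fT s0 w.
  move=> s0 Hs0 w Hw1 Hw2; apply/negP => /rowpred_inv[v Hv Ew]; subst w.
  by move: (Hbet v (Hs0 v Hv)); rewrite Hw1 Hw2.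
have sub_r1 : forall v, v \in r1 -> (v \in r) || (v \in s).
  by move=> v; rewrite Hr1; case: (N v) => ->; rewrite ?orbT.
have sub_s1 : forall v, v \in s1 -> (v \in r) || (v \in s).
  by move=> v; rewrite Hs1; case: (N v) => ->; rewrite ?orbT.
have sub_r : forall v, v \in r -> (v \in r) || (v \in s) by move=> v ->.
have sub_s : forall v, v \in s -> (v \in r) || (v \in s) by move=> v ->; rewrite orbT.
have oth : forall s0 w, (w = lo \/ w = hi) -> rowpred fF s0 w = false.
  move=> s0 w Hw; have [L H] := Plh (fun w => rowpred fF s0 w = false) (fun z _ => rowpred_other s0 (Hne^~ z)).
  by case: Hw => ->.
have Q1 : rowpred fT r3 lo = rowpred fT s lo /\ rowpred fT r3 hi = rowpred fT s hi.
  by apply: (Plh (fun w => rowpred fT r3 w = rowpred fT s w)) => z Hz; by rewrite !rowpred_img // Hr3 Hz.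
have Q2 : rowpred fT s3 lo = rowpred fT r lo /\ rowpred fT s3 hi = rowpred fT r hi.
  by apply: (Plh (fun w => rowpred fT s3 w = rowpred fT r w)) => z Hz; by rewrite !rowpred_img // Hs3 Hz.
have noAB : forall w, lo <= w -> w <= hi -> ~~ rowpred fF p w && ~~ rowpred fF q w.
  apply: (nofixed (C := rowpred fT r) (D := rowpred fT s)
                    (C2 := rowpred fT r3) (D2 := rowpred fT s3) H0 Hlh HK WF WT).
  - by rewrite oth //; left.
  - by rewrite oth //; right.
  - by rewrite oth //; left.
  - by rewrite oth //; right.
  - by move=> w Hw1 Hw2; rewrite (mid _ sub_r) ?(mid _ sub_s).
  - move=> w Hw1 Hw2; split; apply: (rowpred_agree (lo := lo) (hi := hi)) => // v Hv1 Hv2;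
    by rewrite ?Hr3 ?Hs3 ptxy.
  - exact: Q1.1.
  - exact: Q1.2.
  - exact: Q2.1.
  - exact: Q2.2.
  - by case: Hor => -[-> ->]; rewrite !rowpred_img // xr ys (negbTE xs) (negbTE yr).
  - exact: AL1.
  - exact: AL2.
have Nfix : forall (s0 : seq nat), (forall v, v \in s0 -> (v \in p) || (v \in q)) ->
    forall w, lo <= w -> w <= hi -> ~~ rowpred fF s0 w.
  move=> s0 Hs0 w Hw1 Hw2; apply/negP => /rowpred_inv[v Hv Ew].
  have := noAB w Hw1 Hw2; rewrite Ew /rowpred; case/orP: (Hs0 v Hv) => Hv2.
    by rewrite (map_f fF Hv2).
  by rewrite (map_f fF Hv2) andbF.
have Q3 : rowpred fT r2 lo = rowpred fT s1 lo /\ rowpred fT r2 hi = rowpred fT s1 hi.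
  by apply: (Plh (fun w => rowpred fT r2 w = rowpred fT s1 w)) => z Hz; by rewrite !rowpred_img // Hr2 Hs1 Hz addbT; case: (N z).
have Q4 : rowpred fT s2 lo = rowpred fT r1 lo /\ rowpred fT s2 hi = rowpred fT r1 hi.
  by apply: (Plh (fun w => rowpred fT s2 w = rowpred fT r1 w)) => z Hz; by rewrite !rowpred_img // Hs2 Hr1 Hz addbT; case: (N z).
have Q5 : rowpred fT r1 lo != rowpred fT s1 lo /\ rowpred fT r1 hi != rowpred fT s1 hi.
  apply: (Plh (fun w => rowpred fT r1 w != rowpred fT s1 w)) => z.
  rewrite !rowpred_img // Hr1 Hs1 => /orP[] /eqP ->; [case: (N x) | case: (N y)]; by rewrite ?xr ?ys ?(negbTE xs) ?(negbTE yr).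
apply: (core (lo := lo) (hi := hi)) => //.
- by move=> w Hw1 Hw2; rewrite (Nfix p' Hp') ?(Nfix q' Hq').
- by move=> w Hw1 Hw2; rewrite (mid _ sub_r1) ?(mid _ sub_s1).
- move=> w Hw1 Hw2; split; apply: (rowpred_agree (lo := lo) (hi := hi)) => // v Hv1 Hv2;
  by rewrite ?Hr2 ?Hs2 ?Hr1 ?Hs1 ptxy ?addbF.
- exact: Q3.1.
- exact: Q3.2.
- exact: Q4.1.
- exact: Q4.2.
- exact: Q5.1.
- exact: Q5.2.
Qed.

Lemma fL_mono m m' u v : (fL m m' u < fL m m' v) = (u < v).
Proof. by rewrite /fL; case: ifP => _; [exact: f1_mono | exact: f2_mono]. Qed.
Lemma fL'_mono m m' u v : (fL' m m' u < fL' m m' v) = (u < v).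
Proof. by rewrite /fL'; case: ifP => _; [exact: f2_mono | exact: f1_mono]. Qed.
Lemma fLL'_ne m m' u v : fL m m' u != fL' m m' v.
Proof. by rewrite /fL /fL'; case: ifP => _; [exact: f12_ne | exact: f21_ne]. Qed.
Lemma fL'L_ne m m' u v : fL' m m' u != fL m m' v.
Proof. by rewrite /fL /fL'; case: ifP => _; [exact: f21_ne | exact: f12_ne]. Qed.
Lemma fL_pos m m' v : 0 < fL m m' v. Proof. by rewrite /fL; case: ifP. Qed.
Lemma fL'_pos m m' v : 0 < fL' m m' v. Proof. by rewrite /fL'; case: ifP. Qed.
Lemma fL_le m m' v : fL m m' v <= v.*2.+2. Proof. by rewrite /fL /f1 /f2; case: ifP. Qed.
Lemma fL'_le m m' v : fL' m m' v <= v.*2.+2. Proof. by rewrite /fL' /f1 /f2; case: ifP. Qed.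

Lemma mono_injf (f : nat -> nat) : (forall u v, (f u < f v) = (u < v)) -> injective f.
Proof.
move=> Hf u v E; case: (ltngtP u v) => // H.
  by have := Hf u v; rewrite E ltnn H.
by have := Hf v u; rewrite E ltnn H.
Qed.

Lemma conv K m m' a' b' c' d' : (m' = m \/ m' = m.+1) ->
  strict_decr a' -> strict_decr b' -> strict_decr c' -> strict_decr d' ->
  size a' + size b' = (m + m).+1 -> size c' + size d' = m' + m' ->
  (forall v, (v \in a') || (v \in b') -> fL m m' v < K) ->
  (forall v, (v \in c') || (v \in d') -> fL' m m' v < K) ->
  Bplus m m' (a', b') (c', d') <->
  Bp (cnt K (rowpred (fL m m') a')) (cnt K (rowpred (fL m m') b'))
     (cnt K (rowpred (fL' m m') c')) (cnt K (rowpred (fL' m m') d')).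
Proof.
move=> Hm Ha Hb Hc Hd S1 S2 K1 K2.
apply: (iff_trans (BplusE Hm Ha Hb Hc Hd S1 S2)).
have i1 := mono_injf (@fL_mono m m'). have i2 := mono_injf (@fL'_mono m m').
apply: Bp_ext => t; apply: cntf_univ => //; try exact: sdec_uniq.
- by move=> v Hv; apply: K1; rewrite Hv.
- by move=> v Hv; apply: K1; rewrite Hv orbT.
- by move=> v Hv; apply: K2; rewrite Hv.
- by move=> v Hv; apply: K2; rewrite Hv orbT.
Qed.

Lemma weak_cnt K (f : nat -> nat) X Y : (forall u v, (f u < f v) = (u < v)) ->
  strict_decr X -> strict_decr Y ->
  size Y <= size X -> size X <= (size Y).+1 ->
  (forall i, 1 <= i <= size Y -> ent Y i <= ent X i /\ ent X i.+1 <= ent Y i) ->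
  (forall v, (v \in X) || (v \in Y) -> f v < K) ->
  forall t, cnt K (rowpred f Y) t <= cnt K (rowpred f X) t <= (cnt K (rowpred f Y) t).+1.
Proof.
move=> Hf HX HY S1 S2 H HK t.
have inj := mono_injf Hf.
rewrite -!cntf_univ //; try exact: sdec_uniq.
- apply: weak_count => // v w Hvw Hv.
  have : f v <= f w by rewrite leqNgt Hf -leqNgt.
  move: Hv; clear; lia.
- by move=> v Hv; apply: HK; rewrite Hv.
- by move=> v Hv; apply: HK; rewrite Hv orbT.
Qed.

Lemma bet_f (f : nat -> nat) X Y k l : (forall u v, (f u < f v) = (u < v)) ->
  strict_decr X -> strict_decr Y ->
  size Y <= size X -> size X <= (size Y).+1 ->
  (forall i, 1 <= i <= size Y -> ent Y i <= ent X i /\ ent X i.+1 <= ent Y i) ->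
  has_ent X k -> has_ent Y l -> (l == k.-1) || (l == k) ->
  ent X k \notin Y -> ent Y l \notin X ->
  forall v : nat, (v \in X) || (v \in Y) ->
  ~~ ((f (minn (ent X k) (ent Y l)) < f v) && (f v < f (maxn (ent X k) (ent Y l)))).
Proof.
move=> Hf HX HY S1 S2 H Hk Hl Hkl NX NY v Hv.
by rewrite !Hf; apply: (between HX HY S1 S2 H Hk Hl Hkl NX NY).
Qed.

Lemma leq_sumn_mem (s : seq nat) v : v \in s -> v <= sumn s.
Proof.
elim: s => //= h t IH; rewrite in_cons => /orP[/eqP ->|Hv]; first exact: leq_addr.
by apply: leq_trans (IH Hv) _; rewrite leq_addl.
Qed.

Lemma gen_tog K (fF fT : nat -> nat) (p q r s : seq nat) (Mf Mt Pt : pred nat) (x y : nat) :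
  (forall u v, (fT u < fT v) = (u < v)) ->
  (forall u v, fF u != fT v) -> (forall v, 0 < fT v) ->
  (forall v, (v \in r) || (v \in s) -> fT v < K) ->
  (forall t, cnt K (rowpred fF q) t <= cnt K (rowpred fF p) t <= (cnt K (rowpred fF q) t).+1) ->
  (forall t, cnt K (rowpred fT s) t <= cnt K (rowpred fT r) t <= (cnt K (rowpred fT s) t).+1) ->
  x \in r -> x \notin s -> y \in s -> y \notin r ->
  (forall v : nat, (v \in r) || (v \in s) -> ~~ ((fT (minn x y) < fT v) && (fT v < fT (maxn x y)))) ->
  Pt =1 pred2 x y ->
  ALT (cnt K (rowpred fF p)) (cnt K (rowpred fT (move Pt (r, s)).2)) ->
  ALT (cnt K (rowpred fT (move Pt (r, s)).1)) (cnt K (rowpred fF q)) ->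
  Bp (cnt K (rowpred fF (move Mf (p, q)).1)) (cnt K (rowpred fF (move Mf (p, q)).2))
     (cnt K (rowpred fT (move Mt (r, s)).1)) (cnt K (rowpred fT (move Mt (r, s)).2)) <->
  Bp (cnt K (rowpred fF (move Mf (p, q)).1)) (cnt K (rowpred fF (move Mf (p, q)).2))
     (cnt K (rowpred fT (move (symdiff Mt Pt) (r, s)).1))
     (cnt K (rowpred fT (move (symdiff Mt Pt) (r, s)).2)).
Proof.
move=> HfT Hne Hpos HK WF WT xr xs ys yr Hbet HP AL1 AL2.
have Nxy : x != y by apply/eqP => E; move: yr; rewrite -E xr.
have [[Em EM]|[Em EM]] : (minn x y = x /\ maxn x y = y) \/ (minn x y = y /\ maxn x y = x).
  by move: Nxy; clear; move/eqP; lia.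
all: apply: (assembly (N := Mt) (x := x) (y := y) (lo := fT (minn x y)) (hi := fT (maxn x y))
        (p := p) (q := q) (r := r) (s := s) (r3 := (move Pt (r, s)).1) (s3 := (move Pt (r, s)).2)).
all: try exact: (mono_injf HfT).
all: try exact: Hne.
all: try exact: Hpos.
all: try exact: WF.
all: try exact: WT.
all: try exact: Hbet.
all: try exact: xr.
all: try exact: xs.
all: try exact: ys.
all: try exact: yr.
all: rewrite ?Em ?EM.
all: try (by rewrite HfT; move: Nxy Em EM; clear => /eqP; lia).
all: try (by apply: HK; rewrite ?xr ?ys ?orbT).
all: try (by left).
all: try (by right).
all: try (by move=> v; rewrite ?mem_move1 ?mem_move2; case: (Mf v) => ->; rewrite ?orbT).
all: try (by move=> v; rewrite ?mem_move1 ?mem_move2 /symdiff HP).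
all: try (by move=> v; rewrite ?mem_move1 ?mem_move2 HP).
all: try (by move=> v; rewrite ?mem_move1 ?mem_move2).
all: try exact: AL1.
all: try exact: AL2.
all: exact: (mono_injf HfT).
Qed.

Unset Implicit Arguments.
Theorem lemma0808 (a b c d : seq nat) :
  special_def1 a b -> special_def0 c d ->
  (size c = size b \/ size c = (size b).+1) ->
  (exists L L', inD a b c d L L') ->
  forall (M N : pred nat),
    subpred M (singles (a, b)) -> subpred N (singles (c, d)) ->
    (forall P' : pred nat, cons_pair c d P' ->
        inD a b c d (a, b) (move P' (c, d)) ->
        (BplusZ a b c d (move M (a, b)) (move N (c, d)) <->
         BplusZ a b c d (move M (a, b)) (move (symdiff N P') (c, d)))) /\
    (forall P : pred nat, cons_pair a b P ->
        inD a b c d (move P (a, b)) (c, d) ->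
        (BplusZ a b c d (move M (a, b)) (move N (c, d)) <->
         BplusZ a b c d (move (symdiff M P) (a, b)) (move N (c, d)))).
Proof.
move=> [sa sb Sab Iab] [sc sd Scd Icd] Hm _ M N _ _.
pose B := sumn (a ++ b ++ c ++ d).
have bnd : forall v, (v \in a) || (v \in b) || (v \in c) || (v \in d) -> v <= B.
  move=> v Hv; apply: leq_sumn_mem; rewrite !mem_cat; move: Hv; by rewrite -!orbA.
have Kab : forall v, (v \in a) || (v \in b) -> fL (size b) (size c) v < B.*2.+3.
  move=> v Hv; have := bnd v; rewrite Hv /= => /(_ isT) H.
  have := fL_le (size b) (size c) v; move: H; clear; lia.
have Kcd : forall v, (v \in c) || (v \in d) -> fL' (size b) (size c) v < B.*2.+3.
  move=> v Hv; have H : v <= B by apply: bnd; case/orP: Hv => ->; rewrite ?orbT.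
  have := fL'_le (size b) (size c) v; move: H; clear; lia.
have S1 : size b <= size a by rewrite Sab.
have S2 : size a <= (size b).+1 by rewrite Sab.
have S3 : size d <= size c by rewrite Scd.
have S4 : size c <= (size d).+1 by rewrite Scd.
have WZ := weak_cnt (@fL_mono (size b) (size c)) sa sb S1 S2 Iab Kab.
have WZ' := weak_cnt (@fL'_mono (size b) (size c)) sc sd S3 S4 Icd Kcd.
have CM : forall (M0 N0 : pred nat),
    Bplus (size b) (size c) (move M0 (a, b)) (move N0 (c, d)) <->
    Bp (cnt B.*2.+3 (rowpred (fL (size b) (size c)) (move M0 (a, b)).1))
       (cnt B.*2.+3 (rowpred (fL (size b) (size c)) (move M0 (a, b)).2))
       (cnt B.*2.+3 (rowpred (fL' (size b) (size c)) (move N0 (c, d)).1))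
       (cnt B.*2.+3 (rowpred (fL' (size b) (size c)) (move N0 (c, d)).2)).
  move=> M0 N0; have [s1 s2] := sdec_move M0 sa sb; have [s3 s4] := sdec_move N0 sc sd.
  apply: (conv (a' := (move M0 (a, b)).1) (b' := (move M0 (a, b)).2)
               (c' := (move N0 (c, d)).1) (d' := (move N0 (c, d)).2) Hm) => //.
  - by rewrite size_move Sab addSn.
  - by rewrite size_move Scd.
  - move=> v; rewrite mem_move1 mem_move2 => H; apply: Kab; move: H.
    by case: (M0 v) => /orP[] ->; rewrite ?orbT.
  - move=> v; rewrite mem_move1 mem_move2 => H; apply: Kcd; move: H.
    by case: (N0 v) => /orP[] ->; rewrite ?orbT.
split.
- move=> P' [k [l [/andP[Hk Hl] Hkl Sx Sy HP']]] [_ _ _ _ HB].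
  have xc := ent_mem Hk. have yd := ent_mem Hl.
  have xd : ent c k \notin d by move: Sx; rewrite /singles /= xc; case: (ent c k \in d).
  have yc : ent d l \notin c by move: Sy; rewrite /singles /= yd; case: (ent d l \in c).
  have [s3 s4] := sdec_move P' sc sd.
  have HB' := proj1 (conv (K := B.*2.+3) (a' := a) (b' := b) (c' := (move P' (c, d)).1)
               (d' := (move P' (c, d)).2) Hm sa sb s3 s4
               ltac:(by rewrite Sab addSn) ltac:(by rewrite size_move Scd) Kab
               ltac:(move=> v; rewrite mem_move1 mem_move2 => H; apply: Kcd; move: H;
                     by case: (P' v) => /orP[] ->; rewrite ?orbT)) HB.
  case: HB' => _ AL1 AL2.
  rewrite /BplusZ.
  apply: (iff_trans (CM M N)); apply: (iff_trans _ (iff_sym (CM M (symdiff N P')))).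
  apply: (gen_tog M N (x := ent c k) (y := ent d l) (@fL'_mono (size b) (size c))
            (@fLL'_ne (size b) (size c)) (@fL'_pos (size b) (size c)) Kcd WZ WZ' xc xd yd yc
            (bet_f (@fL'_mono (size b) (size c)) sc sd S3 S4 Icd Hk Hl Hkl xd yc) HP' AL1 AL2).
- move=> P [k [l [/andP[Hk Hl] Hkl Sx Sy HP]]] [_ _ _ _ HB].
  have xa := ent_mem Hk. have yb := ent_mem Hl.
  have xb : ent a k \notin b by move: Sx; rewrite /singles /= xa; case: (ent a k \in b).
  have ya : ent b l \notin a by move: Sy; rewrite /singles /= yb; case: (ent b l \in a).
  have [s1 s2] := sdec_move P sa sb.
  have HB' := proj1 (conv (K := B.*2.+3) (a' := (move P (a, b)).1) (b' := (move P (a, b)).2)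
               (c' := c) (d' := d) Hm s1 s2 sc sd
               ltac:(by rewrite size_move Sab addSn) ltac:(by rewrite Scd)
               ltac:(move=> v; rewrite mem_move1 mem_move2 => H; apply: Kab; move: H;
                     by case: (P v) => /orP[] ->; rewrite ?orbT) Kcd) HB.
  case: (proj1 (Bp_sym _ _ _ _) HB') => _ AL1 AL2.
  rewrite /BplusZ.
  apply: (iff_trans (CM M N)); apply: (iff_trans _ (iff_sym (CM (symdiff M P) N))).
  apply: (iff_trans (Bp_sym _ _ _ _)); apply: (iff_trans _ (Bp_sym _ _ _ _)).
  apply: (gen_tog N M (x := ent a k) (y := ent b l) (@fL_mono (size b) (size c))
            (@fL'L_ne (size b) (size c)) (@fL_pos (size b) (size c)) Kab WZ' WZ xa xb yb ya
            (bet_f (@fL_mono (size b) (size c)) sa sb S1 S2 Iab Hk Hl Hkl xb ya) HP AL1 AL2).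
Qed.
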